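(* Let $m\ge2$ and $\theta_c=\frac{m-2}{3m-2}$. There exists a constant $A=A(m)>0$ such that for every $\theta\in(\theta_c,1]$ and every $n\ge1$, $$\rho(\mathrm{Plu},m,n,\theta)\le 2\,m!\,e^{-A(\theta-\theta_c)^2 n}.$$
   Context: A ranking is a strict total order on the candidates. A discrete profile consists of candidates, $n$ voters and a ranking $P_v$ per voter. Plurality: the score of $c$ is the number of voters ranking $c$ first; the highest score wins, ties broken by an arbitrary fixed rule. CM: a rule $f$ is coalitionally manipulable in a discrete profile $P$ if there is a discrete $Q$ with the same candidates and voters such that $f(Q)\ne f(P)$ and every voter $v$ with $Q_v\ne P_v$ prefers $f(Q)$ to $f(P)$ according to $P_v$. Perturbed Culture ($m,n\ge1$, $\theta\in(0,1]$): random discrete profile with candidates $\{1,\dots,m\}$, voters $\{1,\dots,n\}$, each voter independently having ranking $1\succ\cdots\succ m$ with probability $\theta$ and a uniformly random ranking with probability $1-\theta$. $\rho(f,m,n,\theta)$: probability that $f$ is CM in the random profile. *)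

(* Defs.v *)
From HB Require Import structures.
From mathcomp Require Import all_boot all_order all_fingroup all_algebra.
From mathcomp Require Import reals.
From mathcomp Require Import sequences exp.
Set Implicit Arguments. Unset Strict Implicit. Unset Printing Implicit Defensive.
Import Order.TTheory GRing.Theory Num.Theory.
Local Open Scope ring_scope.

(* Candidates: 'I_m (candidate i+1 of the paper is the ordinal i).
   Voters: 'I_n.
   A ranking is a permutation s : {perm 'I_m}; s k is the candidate placed
   at position k (position 0 = top). *)
Definition ranking (m : nat) := {perm 'I_m}.
Definition profile (m n : nat) := {ffun 'I_n -> ranking m}.

Definition pos m (s : ranking m) (c : 'I_m) : nat := nat_of_ord ((s^-1)%g c).

Definition prefers m (s : ranking m) (a b : 'I_m) : bool := (pos s a < pos s b)%N.

Definition plu_score m n (P : profile m n) (c : 'I_m) : nat :=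
  #|[set v : 'I_n | pos (P v) c == 0%N]|.

Definition plu_top m n (P : profile m n) : {set 'I_m} :=
  [set c | [forall d, plu_score P d <= plu_score P c]%N].

Definition tiebreak_ok m (tb : {set 'I_m} -> 'I_m) : Prop :=
  forall S : {set 'I_m}, S != set0 -> tb S \in S.

Definition plurality m n (tb : {set 'I_m} -> 'I_m) (P : profile m n) : 'I_m :=
  tb (plu_top P).

Definition CM m n (f : profile m n -> 'I_m) (P : profile m n) : bool :=
  [exists Q : profile m n,
     (f Q != f P) && [forall v, (Q v != P v) ==> prefers (P v) (f Q) (f P)]].

Definition pc_prob (R : realType) m n (theta : R) (P : profile m n) : R :=
  \prod_(v : 'I_n)
     (theta * (P v == 1%g)%:R + (1 - theta) / (m`!)%:R).

Definition rho (R : realType) m n (f : profile m n -> 'I_m) (theta : R) : R :=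
  \sum_(P : profile m n) pc_prob theta P * (CM f P)%:R.

Definition theta_c (R : realType) (m : nat) : R :=
  (m%:R - 2) / (3 * m%:R - 2).

(* Main.v *)
Require Import Defs.
From HB Require Import structures.
From mathcomp Require Import all_boot all_order all_fingroup all_algebra.
From mathcomp Require Import reals.
From mathcomp Require Import sequences exp.
From mathcomp Require Import ring lra.
Import Order.TTheory GRing.Theory Num.Theory.
Local Open Scope ring_scope.


Lemma sum_pred_ind (R : realType) (T : finType) (p : T -> R) (g : pred T) :
  \sum_s p s * (g s)%:R = \sum_(s | g s) p s.
Proof.
rewrite [RHS]big_mkcond; apply: eq_bigr => s _; by case: (g s); rewrite ?mulr1 ?mulr0.
Qed.

Lemma chernoff (R : realType) (T : finType) (n : nat) (p : T -> R) (g h : pred T) (d : R) :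
  (forall s, 0 <= p s) -> \sum_s p s = 1 -> 0 < d ->
  \sum_(s | g s) p s - \sum_(s | h s) p s <= - d ->
  \sum_(P : {ffun 'I_n -> T}) (\prod_v p (P v)) *
     (#|[set v | h (P v)]| <= #|[set v | g (P v)]|)%N%:R
   <= expR (- (d ^+ 2 / 4 * n%:R)).
Proof.
move=> p0 p1 d0 hgh.
set s := d / 2.
have s0 : 0 < s by rewrite /s divr_gt0.
set a := 1 + s.
have a1 : 1 < a by rewrite /a ltrDl.
have a0 : 0 < a by apply: lt_trans a1.
pose w (t : T) := (if g t then a else 1) * (if h t then a^-1 else 1).
have w0 : forall t, 0 <= w t.
  move=> t; rewrite /w; apply: mulr_ge0; case: ifP => _ //; rewrite ?invr_ge0 ltW //.
have step1 : forall P : {ffun 'I_n -> T},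
   ((#|[set v | h (P v)]| <= #|[set v | g (P v)]|)%N%:R : R) <= \prod_v w (P v).
  move=> P; rewrite /w big_split /=.
  have E : forall (q : pred T) (x : R), \prod_v (if q (P v) then x else 1) = x ^+ #|[set v | q (P v)]|.
    move=> q x; rewrite -prodr_const -big_mkcond /=; apply: eq_bigl => v; by rewrite inE.
  rewrite (E g) (E h).
  case: leqP => hle; last by apply: mulr_ge0; apply: exprn_ge0; rewrite ?invr_ge0 ltW.
  rewrite exprVn -[_ * _^-1]/(_ / _) ler_pdivlMr ?exprn_gt0 // mul1r.
  by rewrite (ler_eXn2l a1).
have step5 : \sum_t p t * w t <= 1 - d ^+ 2 / 4.
  have wb : forall t, w t <= 1 + s * (g t)%:R + (s ^+ 2 - s) * (h t)%:R.
    move=> t; rewrite /w; case: (g t); case: (h t); rewrite /= ?mulr1 ?mulr0 ?addr0 ?mul1r.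
    - rewrite divff ?gt_eqF //; nra.
    - by [].
    - rewrite -div1r ler_pdivrMr // /a; nra.
    - by [].
  apply: le_trans (_ : \sum_t p t * (1 + s * (g t)%:R + (s ^+ 2 - s) * (h t)%:R) <= _).
    by apply: ler_sum => t _; apply: ler_wpM2l.
  under eq_bigr => t _ do rewrite mulrDr mulrDr mulr1 (mulrCA (p t) s) (mulrCA (p t) (s ^+ 2 - s)).
  rewrite !big_split /= -!mulr_sumr !sum_pred_ind p1.
  set pg := \sum_(t | g t) p t; set ph := \sum_(t | h t) p t.
  have ph0 : 0 <= ph by apply: sumr_ge0.
  have ph1 : ph <= 1.
    rewrite -p1 [X in _ <= X](bigID h) /= lerDl; by apply: sumr_ge0.
  move: hgh; rewrite -/pg -/ph => hgh.
  have hd : d = 2 * s by rewrite /s; field.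
  rewrite hd; nra.
apply: le_trans (_ : \sum_(P : {ffun 'I_n -> T}) \prod_v (p (P v) * w (P v)) <= _).
  apply: ler_sum => P _; rewrite big_split /=; apply: ler_wpM2l => //.
  by apply: prodr_ge0.
rewrite -(bigA_distr_bigA (fun (v : 'I_n) t => p t * w t)) /=.
rewrite prodr_const card_ord -mulNr expRM_natr.
have E0 : 0 <= \sum_t p t * w t by apply: sumr_ge0 => t _; exact: mulr_ge0.
apply: le_trans (_ : (1 - d ^+ 2 / 4) ^+ n <= _).
  by apply: lerXn2r => //; rewrite nnegrE //; apply: le_trans step5.
apply: lerXn2r.
- by rewrite nnegrE; apply: le_trans step5.
- by rewrite nnegrE expR_ge0.
- by apply: le_trans (expR_ge1Dx _); rewrite addrC.
Qed.



Lemma pos_mul m (s t : ranking m) x : pos (s * t)%g x = pos s (t^-1 x)%g.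
Proof. by rewrite /pos invMg permM. Qed.

Lemma card_mulr m (Q : pred (ranking m)) (t : ranking m) :
  #|[set s : ranking m | Q (s * t)%g]| = #|[set s | Q s]|.
Proof.
rewrite -[RHS](card_preimset _ (mulIg t)); apply: eq_card => s; by rewrite !inE.
Qed.

Lemma card_top m (c d : 'I_m) :
  #|[set s : ranking m | pos s c == 0%N]| = #|[set s : ranking m | pos s d == 0%N]|.
Proof.
rewrite -(@card_mulr _ _ (tperm c d)); apply: eq_card => s; rewrite !inE.
by rewrite pos_mul tpermV tpermL.
Qed.

Lemma card_pref m (c a : 'I_m) :
  #|[set s : ranking m | prefers s c a]| = #|[set s : ranking m | prefers s a c]|.
Proof.
rewrite -(@card_mulr _ _ (tperm c a)); apply: eq_card => s; rewrite !inE.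
by rewrite /prefers !pos_mul tpermV tpermL tpermR.
Qed.

Lemma pos_inj m (s : ranking m) c d : pos s c = pos s d -> c = d.
Proof. by move/val_inj/perm_inj. Qed.

Lemma card_pref2 m (c a : 'I_m) : c != a ->
  (2 * #|[set s : ranking m | prefers s c a]| = m`!)%N.
Proof.
move=> hca; rewrite mul2n -addnn {2}card_pref -card_Sn -(cardsC [set s : ranking m | prefers s c a]).
congr (_ + _)%N; apply: eq_card => s; rewrite !inE /prefers -leqNgt (leq_eqVlt (pos s a)).
case: eqP => //= h; move: hca; by rewrite (@pos_inj _ _ _ _ h) eqxx.
Qed.

Lemma card_as_sum (T : finType) (Q : pred T) : #|[set s | Q s]| = (\sum_(s : T) (Q s : nat))%N.
Proof. rewrite -sum1_card big_mkcond /=; apply: eq_bigr => s _; rewrite inE; by case: (Q s). Qed.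

Lemma card_top_sum m (z a : 'I_m) (hz : val z = 0%N) :
  (m * #|[set s : ranking m | pos s a == 0%N]| = m`!)%N.
Proof.
have -> : (m * #|[set s : ranking m | pos s a == 0%N]| =
   \sum_(d : 'I_m) #|[set s : ranking m | pos s d == 0%N]|)%N.
  rewrite (eq_bigr (fun _ => #|[set s : ranking m | pos s a == 0%N]|)).
    by rewrite sum_nat_const card_ord.
  by move=> d _; apply: card_top.
have hT : #|{perm 'I_m}| = (\sum_(s : ranking m) 1)%N by rewrite sum1_card.
rewrite -card_Sn hT.
transitivity (\sum_(d : 'I_m) \sum_(s : ranking m) (pos s d == 0%N : nat))%N.
  by apply: eq_bigr => d _; rewrite card_as_sum.
rewrite exchange_big /=; apply: eq_bigr => s _.
rewrite (bigD1 (s z)) //= big1 ?addn0.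
  by rewrite /pos permK hz eqxx.
move=> d hd; case: eqP => // h.
move: hd; suff -> : d = s z by rewrite eqxx.
apply: (@perm_inj _ (s^-1)%g); rewrite permK; apply: val_inj; rewrite hz; exact: h.
Qed.



Lemma tb_in m n (tb : {set 'I_m} -> 'I_m) (htb : tiebreak_ok tb) (a : 'I_m) (P : profile m n) :
  forall d, (plu_score P d <= plu_score P (plurality tb P))%N.
Proof.
have : plurality tb P \in plu_top P.
  apply: htb; apply/set0Pn; exists [arg max_(c > a) plu_score P c].
  rewrite inE; case: arg_maxnP => // i _ H; apply/forallP => d; exact: H.
by rewrite inE => /forallP.
Qed.

Lemma CM_events m n (tb : {set 'I_m} -> 'I_m) (htb : tiebreak_ok tb) (a : 'I_m)
  (ha : val a = 0%N) (P : profile m n) :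
  CM (plurality tb) P -> exists2 c, c != a &
   (#|[set v | pos (P v) a == 0%N]| <= #|[set v | pos (P v) c == 0%N]|)%N ||
   (#|[set v | pos (P v) a == 0%N]| <= #|[set v | prefers (P v) c a]|)%N.
Proof.
move/existsP => [Q /andP [hne /forallP hv]].
have hw := @tb_in _ _ _ htb a P.
case: (eqVneq (plurality tb P) a) => hwa; last first.
  by exists (plurality tb P) => //; rewrite hw.
exists (plurality tb Q); first by rewrite -hwa.
apply/orP; right.
set c := plurality tb Q.
have hca : c != a by rewrite -hwa.
apply: (@leq_trans (plu_score Q a)).
  apply: subset_leq_card; apply/subsetP => v; rewrite !inE => h0.
  have := hv v; case: eqP => [-> //|_] /=.
  by rewrite hwa /prefers (eqP h0).
apply: (leq_trans (@tb_in _ _ _ htb a Q a)).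
apply: subset_leq_card; apply/subsetP => v; rewrite !inE => h0.
have := hv v; case: eqP => [hq _|_] /=; last by rewrite -/c hwa.
move: h0; rewrite hq => /eqP h0.
rewrite /prefers h0 lt0n; apply/negP => /eqP h1.
move: hca; rewrite /c (@pos_inj _ _ _ _ (etrans h0 (esym h1))) eqxx //.
Qed.



Lemma sum_p (R : realType) m (th k : R) (g : pred (ranking m)) :
  \sum_(s | g s) (th * (s == 1%g)%:R + k) = th * (g 1%g)%:R + k * #|[set s | g s]|%:R.
Proof.
rewrite big_split /= -mulr_sumr; congr (_ * _ + _).
  rewrite big_mkcond (bigD1 1%g) //= eqxx big1 ?addr0; first by case: (g 1%g).
  by move=> s /negbTE ->; case: (g s).
rewrite mulr_natr -sumr_const; apply: eq_bigl => s; by rewrite inE.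
Qed.

Lemma pos1 m (x : 'I_m) : pos 1%g x = val x.
Proof. by rewrite /pos invg1 perm1. Qed.

Theorem mainTheorem14 (R : realType) (m : nat) (hm : (2 <= m)%N)
    (tb : {set 'I_m} -> 'I_m) (htb : tiebreak_ok tb) :
  exists A : R, 0 < A /\
    forall (theta : R) (n : nat),
      theta_c R m < theta -> theta <= 1 -> (1 <= n)%N ->
      rho (@plurality m n tb) theta
        <= 2 * (m`!)%:R * expR (- (A * (theta - theta_c R m) ^+ 2 * n%:R)).
Proof.
exists (1 / 4); split; first by rewrite divr_gt0.
move=> th n hth hth1 _.
have hm0 : (0 < m)%N by apply: leq_trans hm.
pose a := Ordinal hm0.
have ha : val a = 0%N by [].
set M : R := (m`!)%:R.
have M0 : 0 < M by rewrite ltr0n fact_gt0.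
set k := (1 - th) / M.
pose p := fun s : ranking m => th * (s == 1%g)%:R + k.
set x : R := m%:R.
have x2 : 2 <= x by rewrite /x (ler_nat R 2 m).
have tc0 : 0 <= theta_c R m.
  by rewrite /theta_c divr_ge0 // -/x; lra.
set d := th - theta_c R m.
have d0 : 0 < d by rewrite /d subr_gt0.
have k0 : 0 <= k by rewrite /k divr_ge0 // ?subr_ge0 // ltW.
have p0 : forall s, 0 <= p s.
  move=> s; rewrite /p addr_ge0 // mulr_ge0 // ?ler0n //.
  exact: (le_trans tc0 (ltW hth)).
have p1 : \sum_s p s = 1.
  have := @sum_p _ _ th k (fun _ => true); rewrite /= mulr1 => ->.
  rewrite (_ : #|_| = m`!); last by rewrite cardsT card_Sn.
  rewrite /k -/M divfK ?gt_eqF //; ring.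
set e := expR (- (d ^+ 2 / 4 * n%:R)).
have E1 : forall c : 'I_m, c != a ->
  \sum_(P : {ffun 'I_n -> ranking m}) (\prod_v p (P v)) *
     (#|[set v | pos (P v) a == 0%N]| <= #|[set v | pos (P v) c == 0%N]|)%N%:R <= e.
  move=> c hc; apply: (@chernoff _ _ n p (fun s => pos s c == 0%N) (fun s => pos s a == 0%N) d) => //.
  rewrite !sum_p !pos1 ha eqxx (@card_top _ c a).
  have -> : (val c == 0%N) = false.
    by apply/negbTE; apply: contra hc => /eqP h; apply/eqP/val_inj; rewrite h.
  rewrite /d /= mulr0 mulr1; lra.
have E2 : forall c : 'I_m, c != a ->
  \sum_(P : {ffun 'I_n -> ranking m}) (\prod_v p (P v)) *
     (#|[set v | pos (P v) a == 0%N]| <= #|[set v | prefers (P v) c a]|)%N%:R <= e.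
  move=> c hc; apply: (@chernoff _ _ n p (fun s => prefers s c a) (fun s => pos s a == 0%N) d) => //.
  rewrite !sum_p pos1 ha eqxx.
  have -> : prefers 1%g c a = false by rewrite /prefers !pos1 ha ltn0.
  have hp : #|[set s : ranking m | prefers s c a]|%:R = M / 2 :> R.
    rewrite /M -(@card_pref2 _ _ _ hc) natrM; by field.
  have ht : #|[set s : ranking m | pos s a == 0%N]|%:R = M / x :> R.
    rewrite /M -(@card_top_sum _ a a ha) natrM -/x; field; rewrite /x; lra.
  rewrite hp ht /k /= mulr0 mulr1 add0r.
  have x0 : x != 0 by rewrite gt_eqF //; lra.
  have y0 : 3 * x - 2 != 0 by rewrite gt_eqF //; lra.
  have M0' : M != 0 by rewrite gt_eqF.
  have key : x - 2 <= th * (3 * x - 2).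
    move: hth; rewrite /theta_c -/x ltr_pdivrMr; last lra.
    lra.
  rewrite -subr_ge0.
  have -> : - d - ((1 - th) / M * (M / 2) - (th + (1 - th) / M * (M / x)))
      = (x - 2) * (th * (3 * x - 2) - (x - 2)) / (2 * x * (3 * x - 2)).
    rewrite /d /theta_c -/x; field.
    by rewrite x0 y0 /=; exact: M0'.
  apply: divr_ge0; last by apply: mulr_ge0; lra.
  apply: mulr_ge0; lra.
set I1 := fun c (P : profile m n) =>
  ((#|[set v | pos (P v) a == 0%N]| <= #|[set v | pos (P v) c == 0%N]|)%N%:R : R).
set I2 := fun c (P : profile m n) =>
  ((#|[set v | pos (P v) a == 0%N]| <= #|[set v | prefers (P v) c a]|)%N%:R : R).
have hpt : forall P : profile m n,
    ((CM (plurality tb) P)%:R : R) <= \sum_(c | c != a) (I1 c P + I2 c P).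
  move=> P; case hcm: (CM _ P); last first.
    by rewrite sumr_ge0 // => c _; rewrite addr_ge0 // ler0n.
  have [c hc hor] := @CM_events _ _ _ htb a ha P hcm.
  rewrite (bigD1 c) //= -[1%:R]addr0 lerD //; last first.
    by rewrite sumr_ge0 // => c' _; rewrite addr_ge0 // ler0n.
  rewrite /I1 /I2; case/orP: hor => ->; rewrite /= ?lerDl ?lerDr ?ler0n //.
rewrite /rho /pc_prob.
apply: le_trans (_ : \sum_(P : profile m n) (\prod_v p (P v)) *
    \sum_(c | c != a) (I1 c P + I2 c P) <= _).
  apply: ler_sum => P _; apply: ler_wpM2l; last exact: hpt.
  by apply: prodr_ge0 => v _; exact: p0.
under eq_bigr => P _ do rewrite mulr_sumr.
rewrite exchange_big /=.
apply: le_trans (_ : \sum_(c | c != a) (e + e) <= _).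
  apply: ler_sum => c hc.
  under eq_bigr => P _ do rewrite mulrDr.
  rewrite big_split /=; apply: lerD; [exact: E1|exact: E2].
have -> : 1 / 4 * d ^+ 2 = d ^+ 2 / 4 by rewrite mul1r mulrC.
rewrite -/e.
have e0 : 0 <= e by rewrite expR_ge0.
apply: le_trans (_ : \sum_(c : 'I_m) (e + e) <= _).
  rewrite [X in _ <= X](bigID (fun c => c != a)) /= lerDl.
  by rewrite sumr_ge0 // => c _; rewrite addr_ge0.
rewrite sumr_const card_ord -mulr_natr -/x.
have xM : x <= M by rewrite /x /M ler_nat fact_geq.
nra.
Qed.
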